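(* Let $d\ge 1$, let $g_k\in\mathbb{R}^d$ be a fixed (true) gradient vector, let $H_k\in\mathbb{R}^{d\times d}$ be a fixed matrix (an inverse Hessian approximation, not necessarily symmetric or positive definite), and let $\beta_k\in\mathbb{R}$ be fixed. Let $\widehat{g}_k = g_k + v_k$, where $v_k$ is a random vector with $\mathbb{E}[v_k]=0$ and $\mathbb{E}[v_k v_k^{\top}] = \sigma_g^2 I_d$ for some $\sigma_g^2\ge 0$. Define $p_k = -H_k g_k$ and $\widehat{p}_k = -H_k\widehat{g}_k$. If $$\beta_k > \frac{p_k^{\top} g_k - \sigma_g^2\,\mathrm{Tr}(H_k)}{g_k^{\top} g_k + d\,\sigma_g^2},$$ then $$\mathbb{E}\big[(\widehat{p}_k - \beta_k\widehat{g}_k)^{\top}\widehat{g}_k\big] < 0 .$$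
   Context: This concerns stochastic quasi-Newton optimisation of a function with gradient $g_k$ at iterate $x_k$, where only noisy gradient measurements $\widehat{g}_k$ are available; the search direction is $\widehat{p}_k=-H_k\widehat{g}_k$ and it is modified to $\widehat{p}_k-\beta_k\widehat{g}_k$ to obtain a descent direction in expectation. The expectation is taken over the gradient noise $v_k$, with $H_k$, $g_k$, $\beta_k$ treated as deterministic. Additionally assume $g_k^{\top}g_k + d\sigma_g^2>0$ so the bound is well defined. *)

(* Defs.v *)
From HB Require Import structures.
From mathcomp Require Import all_boot all_order all_algebra.
From mathcomp Require Import all_classical all_reals all_analysis.
Set Implicit Arguments. Unset Strict Implicit. Unset Printing Implicit Defensive.
Import Order.TTheory GRing.Theory Num.Theory.
Local Open Scope ring_scope.

Definition dotv (R : pzRingType) (d : nat) (u w : 'cV[R]_d) : R := (u^T *m w) 0 0.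

(* Main.v *)
From HB Require Import structures.
From mathcomp Require Import all_boot all_order all_algebra.
From mathcomp Require Import all_classical all_reals all_analysis.
From mathcomp Require Import ring lra.
Import Order.TTheory GRing.Theory Num.Theory.
Local Open Scope ring_scope.
Require Import Defs.

Lemma int_lin (R : realType) (dm : measure_display) (T : measurableType dm)
  (P : probability T R) (X Y Z : T -> R) (a b e f x y z : R) :
  P.-integrable setT (fun w => (X w)%:E) ->
  P.-integrable setT (fun w => (Y w)%:E) ->
  P.-integrable setT (fun w => (Z w)%:E) ->
  (\int[P]_w (X w)%:E = x%:E)%E ->
  (\int[P]_w (Y w)%:E = y%:E)%E ->
  (\int[P]_w (Z w)%:E = z%:E)%E ->
  (\int[P]_w (a + b * X w + e * Y w + f * Z w)%:E = (a + b * x + e * y + f * z)%:E)%E.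
Proof.
move=> iX iY iZ hX hY hZ.
have ic : P.-integrable setT (fun w => a%:E) by exact: (finite_measure_integrable_cst P a measurableT).
have iM : forall (k : R) (W : T -> R), P.-integrable setT (fun w => (W w)%:E) ->
   P.-integrable setT (fun w => (k * W w)%:E).
  move=> k W iW; have := integrableZl measurableT k iW; apply: eq_integrable => // w _; by rewrite EFinM.
have iMX := iM b X iX; have iMY := iM e Y iY; have iMZ := iM f Z iZ.
have hM : forall (k : R) (W : T -> R) (t : R), P.-integrable setT (fun w => (W w)%:E) -> (\int[P]_w (W w)%:E = t%:E)%E ->
   (\int[(P : {measure set T -> \bar R})]_w (k * W w)%:E = (k * t)%:E)%E.
  move=> k W t iW hW; under eq_integral do rewrite EFinM; rewrite integralZl //; transitivity (k%:E * t%:E)%E; [congr (_ * _)%E; exact: hW | by []].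
have E : forall (f : T -> \bar R), (\int[P]_w f w = \int[(P : {measure set T -> \bar R})]_w f w)%E by [].
change (\int[(P : {measure set T -> \bar R})]_w (a + b * X w + e * Y w + f * Z w)%R%:E = (a + b * x + e * y + f * z)%R%:E)%E.
under eq_integral do rewrite !EFinD.
rewrite integralD //; last by apply: integrableD => //; apply: integrableD.
rewrite integralD //; last by apply: integrableD.
rewrite integralD //.
have P1 : (P : {measure set T -> \bar R}) setT = 1%E by exact: probability_setT.
rewrite integral_cst // P1 mule1 (hM _ _ _ iX hX) (hM _ _ _ iY hY) (hM _ _ _ iZ hZ).
by rewrite -!EFinD.
Qed.

Lemma int_lin_i (R : realType) (dm : measure_display) (T : measurableType dm)
  (P : probability T R) (X Y Z : T -> R) (a b e f : R) :
  P.-integrable setT (fun w => (X w)%:E) ->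
  P.-integrable setT (fun w => (Y w)%:E) ->
  P.-integrable setT (fun w => (Z w)%:E) ->
  P.-integrable setT (fun w => (a + b * X w + e * Y w + f * Z w)%:E).
Proof.
move=> iX iY iZ.
have ic : P.-integrable setT (fun w => a%:E) by exact: (finite_measure_integrable_cst P a measurableT).
have iM : forall (k : R) (W : T -> R), P.-integrable setT (fun w => (W w)%:E) ->
   P.-integrable setT (fun w => (k * W w)%:E).
  move=> k W iW; have := integrableZl measurableT k iW; apply: eq_integrable => // w _; by rewrite EFinM.
have := integrableD measurableT (integrableD measurableT (integrableD measurableT ic (iM b X iX)) (iM e Y iY)) (iM f Z iZ).
by apply: eq_integrable => // w _; rewrite /= !EFinD.
Qed.

Lemma sum_delta (R : pzRingType) (n : nat) (i : 'I_n) (u : 'I_n -> R) :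
  \sum_j (i == j)%:R * u j = u i.
Proof.
rewrite (bigD1 i) //= eqxx mul1r big1 ?addr0 // => j /negbTE ji.
by rewrite eq_sym ji mul0r.
Qed.

Lemma int_sum2 (R : realType) (dm : measure_display) (T : measurableType dm)
  (P : probability T R) (n : nat) (F : 'I_n -> 'I_n -> T -> R) (r : 'I_n -> 'I_n -> R) :
  (forall i j, P.-integrable setT (fun w => (F i j w)%:E)) ->
  (forall i j, \int[P]_w (F i j w)%:E = (r i j)%:E)%E ->
  (\int[P]_w (\sum_i \sum_j F i j w)%:E = (\sum_i \sum_j r i j)%:E)%E.
Proof.
move=> iF hF.
change (\int[(P : {measure set T -> \bar R})]_w (\sum_i \sum_j F i j w)%:E = (\sum_i \sum_j r i j)%:E)%E.
under eq_integral do rewrite -sumEFin.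
rewrite integral_sum //; last first.
  move=> i; under eq_fun do rewrite -sumEFin.
  by apply: (integrable_sum measurableT) => j _; exact: iF.
rewrite -sumEFin; apply: eq_bigr => i _.
under eq_integral do rewrite -sumEFin.
rewrite (integral_sum measurableT (fun j => iF i j)).
rewrite -sumEFin; apply: eq_bigr => j _.
exact: hF.
Qed.

Theorem mainTheorem1 (R : realType) (dm : measure_display) (T : measurableType dm)
  (P : probability T R) (d : nat) (hd : (0 < d)%N)
  (g : 'cV[R]_d) (H : 'M[R]_d) (beta sigma2 : R) (v : T -> 'cV[R]_d)
  (hsigma : 0 <= sigma2)
  (hmeas : forall i : 'I_d, measurable_fun setT (fun w => v w i ord0))
  (hint1 : forall i : 'I_d, P.-integrable setT (fun w => (v w i ord0)%:E))
  (hint2 : forall i j : 'I_d, P.-integrable setT (fun w => (v w i ord0 * v w j ord0)%:E))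
  (hmean : forall i : 'I_d, ('E_P[fun w => v w i ord0] = 0)%E)
  (hcov : forall i j : 'I_d,
     ('E_P[fun w => (v w i ord0 * v w j ord0)%R] = (sigma2 * (i == j)%:R)%:E)%E)
  (hden : 0 < dotv g g + d%:R * sigma2)
  (hbeta : beta > (dotv (- (H *m g)) g - sigma2 * \tr H) / (dotv g g + d%:R * sigma2)) :
  let ghat := fun w => g + v w in
  let phat := fun w => - (H *m ghat w) in
  ('E_P[fun w => (dotv (phat w - beta *: ghat w) (ghat w))%R] < 0)%E.
Proof.
cbv zeta.
pose c := fun i j : 'I_d => - H i j - beta * (i == j)%:R.
pose F := fun (i j : 'I_d) (w : T) =>
  c i j * (g i 0 * g j 0) + (c i j * g i 0) * v w j 0 + (c i j * g j 0) * v w i 0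
  + c i j * (v w i 0 * v w j 0).
have pw : forall w, dotv (- (H *m (g + v w)) - beta *: (g + v w)) (g + v w) = \sum_i \sum_j F i j w.
  move=> w; rewrite /dotv mxE; apply: eq_bigr => i _.
  rewrite !mxE.
  under eq_bigr do rewrite mxE.
  transitivity (\sum_j (-(H i j * (g j 0 + v w j 0)) * (g i 0 + v w i 0))
     + \sum_j ((i == j)%:R * (- beta * (g j 0 + v w j 0) * (g i 0 + v w i 0)))).
    rewrite (@sum_delta R d i (fun j => - beta * (g j 0 + v w j 0) * (g i 0 + v w i 0))).
    by rewrite -mulr_suml sumrN mulrBl !mulNr.
  rewrite -big_split; apply: eq_bigr => j _; rewrite /F /c; rewrite [LHS]/=; ring.
have -> : (fun w => dotv (- (H *m (g + v w)) - beta *: (g + v w)) (g + v w))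
   = (fun w => \sum_i \sum_j F i j w) by apply: funext => w; exact: pw.
move: hmean hcov; rewrite unlock => hmean hcov.
rewrite (@int_sum2 R dm T P d F (fun i j => c i j * (g i 0 * g j 0) + c i j * g i 0 * 0
   + c i j * g j 0 * 0 + c i j * (sigma2 * (i == j)%:R))); last first.
- move=> i j; rewrite /F; apply: int_lin => //; rewrite ?hmean ?hcov //.
- move=> i j; rewrite /F; exact: int_lin_i.
rewrite lte_fin.
have inner : forall i : 'I_d, \sum_j (c i j * (g i 0 * g j 0) + c i j * g i 0 * 0 + c i j * g j 0 * 0 +
           c i j * (sigma2 * (i == j)%:R)) = \sum_j (-(H i j * g j 0) * g i 0)
      + (- beta * (g i 0 * g i 0) - H i i * sigma2 - beta * sigma2).
  move=> i.
  transitivity (\sum_j (-(H i j * g j 0) * g i 0 + (i == j)%:R * (- beta * (g i 0 * g j 0) - H i j * sigma2 - beta * sigma2))).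
    apply: eq_bigr => j _; rewrite /c; have [->|ne] := eqVneq i j.
      by rewrite mulr1n; ring.
    by rewrite mulr0n; ring.
  by rewrite big_split /= (@sum_delta R d i (fun j => - beta * (g i 0 * g j 0) - H i j * sigma2 - beta * sigma2)).
rewrite (eq_bigr _ (fun i _ => inner i)) big_split /=.
have eA : \sum_i \sum_j (-(H i j * g j 0) * g i 0) = dotv (- (H *m g)) g.
  rewrite /dotv mxE; apply: eq_bigr => i _; rewrite !mxE.
  by rewrite -mulr_suml sumrN.
have eB : \sum_(i < d) (- beta * (g i 0 * g i 0) - H i i * sigma2 - beta * sigma2)
   = - beta * dotv g g - sigma2 * \tr H - beta * (sigma2 * d%:R).
  rewrite /dotv /mxtrace mxE !big_split /= !sumrN sumr_const card_ord -mulr_sumr -mulr_suml.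
  under [in RHS]eq_bigr do rewrite mxE.
  rewrite -mulr_natr; ring.
rewrite eA eB.
rewrite ltr_pdivrMr // mulrDr in hbeta.
nra.
Qed.
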